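(* Consider Online Convex Optimization with Memory (OCO-M) with memory length $m\ge 0$ over horizon $T$: at each $t=1,\dots,T$ the learner picks $\mathbf{x}_t\in\mathcal{X}$, then a loss $f_t:\mathcal{X}^{m+1}\to\mathbb{R}$ is revealed and the learner suffers $f_t(\mathbf{x}_{t-m},\dots,\mathbf{x}_t)$, with $\mathbf{x}_\tau=\mathbf{0}$ for $\tau\le 0$. Assume: (i) $\mathcal{X}$ is convex, compact, contains $\mathbf{0}$ and has diameter at most $D$; (ii) each unary loss $\widetilde f_t(\mathbf{x}):=f_t(\mathbf{x},\dots,\mathbf{x})$ is convex; (iii) $0\le a\le f_t\le a+c$ on $\mathcal{X}^{m+1}$ for all $t$; (iv) each $f_t$ is coordinate-wise $L$-Lipschitz: $|f_t(\mathbf{x}_0,\dots,\mathbf{x}_m)-f_t(\mathbf{y}_0,\dots,\mathbf{y}_m)|\le L\sum_{i=0}^m\|\mathbf{x}_i-\mathbf{y}_i\|_2$; (v) $\|\nabla\widetilde f_t(\mathbf{x})\|_2\le G$ for all $\mathbf{x}\in\mathcal{X}$ and $t$. Run OFW on the unary functions $\widetilde f_1,\dots,\widetilde f_T$ (initialize $\mathbf{x}_1\in\mathcal{X}$; $\mathbf{x}_t'\in\arg\min_{\mathbf{x}\in\mathcal{X}}\langle\nabla\widetilde f_t(\mathbf{x}_t),\mathbf{x}\rangle$; $\mathbf{x}_{t+1}=(1-\eta)\mathbf{x}_t+\eta\mathbf{x}_t'$) with step size $\eta=\mathcal{O}(\sqrt{(1+V_T)/T})$. Then for any comparator sequence $(\mathbf{v}_1,\dots,\mathbf{v}_T)\in\mathcal{X}^T$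 (with $\mathbf{v}_\tau=\mathbf{0}$ for $\tau\le0$), $$\operatorname{Regret}_T^D:=\sum_{t=1}^T f_t(\mathbf{x}_{t-m},\dots,\mathbf{x}_t)-\sum_{t=1}^T f_t(\mathbf{v}_{t-m},\dots,\mathbf{v}_t)\le\mathcal{O}\big(\sqrt{T(1+V_T+D_T)}+C_T\big)\le\mathcal{O}\big(\sqrt{T(1+V_T+D_T+C_T)}\big).$$
   Context: $V_T=\sum_{t=1}^T\sup_{\mathbf{x}\in\mathcal{X}}|\widetilde f_t(\mathbf{x})-\widetilde f_{t-1}(\mathbf{x})|$, $D_T=\sum_{t=1}^T\|\nabla\widetilde f_t(\mathbf{x}_t)-\nabla\widetilde f_{t-1}(\mathbf{x}_{t-1})\|_2^2$ (with a fixed initial $\widetilde f_0$, $\mathbf{x}_0$ by indexing convention), and $C_T=\sum_{t=2}^T\|\mathbf{v}_t-\mathbf{v}_{t-1}\|_2$ is the path length of the comparators. $\mathcal{O}(\cdot)$ hides constants depending only on $D,a,c,L,m,G$. *)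

(* Defs.v *)
From HB Require Import structures.
From mathcomp Require Import all_boot all_order all_algebra.
From mathcomp Require Import all_classical all_reals all_analysis.
Set Implicit Arguments. Unset Strict Implicit. Unset Printing Implicit Defensive.
Import Order.TTheory GRing.Theory Num.Theory.
Import numFieldNormedType.Exports.
Local Open Scope classical_set_scope.
Local Open Scope ring_scope.

Section OCOM.
Variables (R : realType) (d : nat).
Notation vec := 'rV[R]_d.

Definition dot (u w : vec) : R := \sum_(i < d) u 0 i * w 0 i.
Definition norm2 (u : vec) : R := Num.sqrt (dot u u).

Definition convex_setX (X : set vec) : Prop :=
  forall x y (l : R), X x -> X y -> 0 <= l <= 1 -> X ((1 - l) *: x + l *: y).

Definition convex_on (X : set vec) (h : vec -> R) : Prop :=
  forall x y (l : R), X x -> X y -> 0 <= l <= 1 ->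
    h ((1 - l) *: x + l *: y) <= (1 - l) * h x + l * h y.

Definition is_gradient (h : vec -> R) (g : vec) (x : vec) : Prop :=
  forall e : R, 0 < e -> exists2 del : R, 0 < del &
    forall y : vec, norm2 y < del ->
      `| h (x + y) - h x - dot g y | <= e * norm2 y.

(* the window (z_{t-m}, ..., z_t), with z_tau = 0 for tau <= 0;
   index i : 'I_(m+1) corresponds to time t - m + i *)
Definition window (m : nat) (z : nat -> vec) (t : nat) : 'I_m.+1 -> vec :=
  fun i => if (m < t + i)%N then z (t + i - m)%N else 0.

Definition unary (m : nat) (F : ('I_m.+1 -> vec) -> R) (x : vec) : R :=
  F (fun _ => x).

Definition VT (m : nat) (X : set vec) (f : nat -> ('I_m.+1 -> vec) -> R)
  (T : nat) : R :=
  \sum_(1 <= t < T.+1)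
     sup [set `| unary (f t) x - unary (f t.-1) x | | x in X].

Definition DT (grad : nat -> vec -> vec) (x : nat -> vec) (T : nat) : R :=
  \sum_(1 <= t < T.+1) norm2 (grad t (x t) - grad t.-1 (x t.-1)) ^+ 2.

Definition CT (v : nat -> vec) (T : nat) : R :=
  \sum_(2 <= t < T.+1) norm2 (v t - v t.-1).

Definition regretD (m : nat) (f : nat -> ('I_m.+1 -> vec) -> R)
  (x v : nat -> vec) (T : nat) : R :=
  \sum_(1 <= t < T.+1) f t (window x t) - \sum_(1 <= t < T.+1) f t (window v t).

End OCOM.

(* Main.v *)
Require Import Defs.
From HB Require Import structures.
From mathcomp Require Import all_boot all_order all_algebra.
From mathcomp Require Import all_classical all_reals all_analysis.
From mathcomp Require Import ring lra zify.
Import Order.TTheory GRing.Theory Num.Theory.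
Import numFieldNormedType.Exports.
Local Open Scope classical_set_scope.
Local Open Scope ring_scope.

Set Implicit Arguments. Unset Strict Implicit. Unset Printing Implicit Defensive.

Section Vec.
Variables (R : realType) (d : nat).
Notation vec := 'rV[R]_d.
Implicit Types u w z : vec.

Lemma dot_lin (p q : R) u w z :
  dot (p *: u + q *: w) z = p * dot u z + q * dot w z.
Proof.
rewrite /dot !mulr_sumr -big_split /=; apply: eq_bigr => i _; rewrite !mxE; ring.
Qed.

Lemma dotC u w : dot u w = dot w u.
Proof. by rewrite /dot; apply: eq_bigr => i _; rewrite mulrC. Qed.

Lemma dotB u w z : dot (u - w) z = dot u z - dot w z.
Proof.
rewrite /dot -sumrB; apply: eq_bigr => i _; rewrite !mxE; ring.
Qed.

Lemma dotBr u w z : dot z (u - w) = dot z u - dot z w.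
Proof. by rewrite dotC dotB !(dotC z). Qed.

Lemma dotZ (p : R) u z : dot (p *: u) z = p * dot u z.
Proof. by rewrite /dot mulr_sumr; apply: eq_bigr => i _; rewrite !mxE mulrA. Qed.

Lemma dotZr (p : R) u z : dot z (p *: u) = p * dot z u.
Proof. by rewrite dotC dotZ dotC. Qed.

Lemma dot_ge0 u : 0 <= dot u u.
Proof. by rewrite /dot; apply: sumr_ge0 => i _; rewrite -expr2 sqr_ge0. Qed.

Lemma norm2_ge0 u : 0 <= norm2 u.
Proof. exact: sqrtr_ge0. Qed.

Lemma sqr_norm2 u : norm2 u ^+ 2 = dot u u.
Proof. by rewrite /norm2 sqr_sqrtr // dot_ge0. Qed.

Lemma dot_quad (p q : R) u w :
  dot (p *: u - q *: w) (p *: u - q *: w) =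
  p ^+ 2 * dot u u - 2 * p * q * dot u w + q ^+ 2 * dot w w.
Proof.
rewrite /dot !mulr_sumr -sumrB -big_split /=; apply: eq_bigr => i _; rewrite !mxE; ring.
Qed.

Lemma dot0 u : dot u u = 0 -> forall w, dot u w = 0.
Proof.
move=> h w.
have hi : forall i, u 0 i = 0.
  move=> i; move: h; rewrite /dot => /psumr_eq0P h.
  have := h (fun j _ => ltac:(by rewrite -expr2 sqr_ge0)) i isT.
  by rewrite -expr2 => /eqP; rewrite sqrf_eq0 => /eqP.
by rewrite /dot big1 // => i _; rewrite hi mul0r.
Qed.

Lemma cauchy_schwarz u w : dot u w <= norm2 u * norm2 w.
Proof.
have [hP|hP] := lerP (dot u w) 0.
  by apply: le_trans hP _; rewrite mulr_ge0 // norm2_ge0.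
set A := dot u u; set B := dot w w; set P := dot u w in hP *.
have hA : 0 <= A := dot_ge0 u. have hB : 0 <= B := dot_ge0 w.
have key : P ^+ 2 <= A * B.
  have [hB0|hB0] := eqVneq B 0.
    exfalso.
    have := dot_ge0 (1 *: u - (A / P + 1) *: w).
    rewrite dot_quad -/A -/B -/P hB0.
    have -> : 1 ^+ 2 * A - 2 * 1 * (A / P + 1) * P + (A / P + 1) ^+ 2 * 0
       = - A - 2 * P by field; rewrite gt_eqF.
    move=> h; lra.
  have := dot_ge0 (B *: u - P *: w).
  rewrite dot_quad -/A -/B -/P => h.
  have hBp : 0 < B by rewrite lt_neqAle eq_sym hB0 hB.
  have : 0 <= B * (A * B - P ^+ 2) by move: h; nra.
  by rewrite pmulr_rge0 // subr_ge0.
rewrite /norm2 -/A -/B -sqrtrM // -(ger0_norm (ltW hP)) -sqrtr_sqr.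
by rewrite ler_wsqrtr.
Qed.

Lemma norm2D u w : norm2 (u + w) <= norm2 u + norm2 w.
Proof.
have e : u + w = 1 *: u - (-1) *: w by rewrite !scaleN1r opprK !scale1r.
rewrite {1}/norm2 e dot_quad -!sqr_norm2.
have cs := cauchy_schwarz u w.
rewrite -(ger0_norm (addr_ge0 (norm2_ge0 u) (norm2_ge0 w))) -sqrtr_sqr.
apply: ler_wsqrtr; rewrite -/(norm2 u); lra.
Qed.

Lemma norm2Z (p : R) u : 0 <= p -> norm2 (p *: u) = p * norm2 u.
Proof.
move=> hp; rewrite /norm2 dotZ dotZr mulrA -expr2 sqrtrM ?sqr_ge0 //.
by rewrite sqrtr_sqr ger0_norm.
Qed.

Lemma norm2_sym u w : norm2 (u - w) = norm2 (w - u).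
Proof. by rewrite /norm2 /dot; congr Num.sqrt; apply: eq_bigr => i _; rewrite !mxE; ring. Qed.


Lemma grad_ineq (X : set vec) (F : vec -> R) g x y :
  convex_on X F -> is_gradient F g x -> X x -> X y ->
  F x + dot g (y - x) <= F y.
Proof.
move=> hF hg hx hy.
set N := norm2 (y - x).
have hN : 0 <= N := norm2_ge0 _.
apply/ler_addgt0Pr => e he.
have he' : 0 < e / (N + 1) by rewrite divr_gt0 // ltr_wpDl.
have [del hdel h] := hg _ he'.
set l := del / (del + N + 1).
have hl0 : 0 < l by rewrite divr_gt0 //; lra.
have hl1 : l <= 1 by rewrite ler_pdivrMr; lra.
have hlN : l * N < del.
  rewrite /l mulrAC ltr_pdivrMr; last lra.
  nra.
have := h (l *: (y - x)); rewrite norm2Z ?(ltW hl0) // => /(_ hlN).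
have -> : x + l *: (y - x) = (1 - l) *: x + l *: y.
  by apply/rowP => i; rewrite !mxE; ring.
rewrite dotZr -/N => /ler_normlP [h1 _].
have hc := hF x y l hx hy; rewrite hl1 (ltW hl0) in hc; have {}hc := hc isT.
have k1 : l * (F x + dot g (y - x) - F y - e / (N + 1) * N) <= 0.
  move: h1 hc; set Fm := F _; move=> h1 hc. nra.
have k2 : F x + dot g (y - x) - F y - e / (N + 1) * N <= 0.
  by move: k1; rewrite pmulr_rle0.
have k3 : e / (N + 1) * N <= e.
  rewrite mulrAC ler_pdivrMr; last lra.
  by rewrite ler_pM2l //; lra.
lra.
Qed.

Lemma path_bound (z : nat -> vec) t n : (n <= t)%N ->
  norm2 (z (t - n)%N - z t) <= \sum_(0 <= k < n) norm2 (z (t - k)%N - z (t - k).-1).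
Proof.
elim: n => [|n IH] hn.
  by rewrite subn0 subrr big_geq // /norm2 /dot big1 ?sqrtr0 // => i _; rewrite mxE mul0r.
rewrite big_nat_recr //=.
have -> : z (t - n.+1)%N - z t = (z (t - n.+1)%N - z (t - n)%N) + (z (t - n)%N - z t).
  by rewrite addrA subrK.
apply: le_trans (norm2D _ _) _.
rewrite [X in X <= _]addrC; apply: lerD; first exact: IH (ltnW hn).
by rewrite norm2_sym subnS.
Qed.

End Vec.


Section Sums.
Variable R : realType.

Lemma sum_shift1 (g : nat -> R) n : (forall t, 0 <= g t) -> g 0%N = 0 ->
  \sum_(0 <= t < n) g t.-1 <= \sum_(0 <= t < n) g t.
Proof.
move=> hg h0; case: n => [|n]; first by rewrite !big_geq.
rewrite big_nat_recl // h0 add0r big_nat_recr //= lerDl; exact: hg.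
Qed.

Lemma sum_shift (h : nat -> R) n k : (forall t, 0 <= h t) -> h 0%N = 0 ->
  \sum_(0 <= t < n) h (t - k)%N <= \sum_(0 <= t < n) h t.
Proof.
move=> hg h0; elim: k => [|k IH].
  by under eq_bigr do rewrite subn0.
apply: le_trans IH.
have -> : \sum_(0 <= t < n) h (t - k.+1)%N = \sum_(0 <= t < n) (fun u => h (u - k)%N) t.-1.
  by apply: eq_bigr => t _; congr h; lia.
apply: (@sum_shift1 (fun u => h (u - k)%N)) => //.
Qed.

Lemma sum_count (m n : nat) :
  \sum_(1 <= t < n.+1) ((t <= m)%N%:R : R) <= (minn n m)%:R.
Proof.
elim: n => [|n IH]; first by rewrite big_geq.
rewrite big_nat_recr //=.
case: (leqP n.+1 m) => h.
  apply: (@le_trans _ _ ((minn n m)%:R + 1)); first by apply: lerD.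
  by rewrite -natr1 lerD // ler_nat; lia.
rewrite addr0 (le_trans IH) // ler_nat; lia.
Qed.

Lemma amgm (lam p q : R) : 0 < lam -> p * q <= (lam * p ^+ 2 + q ^+ 2 / lam) / 2.
Proof.
move=> hl.
have hi : lam * lam^-1 = 1 by rewrite mulfV // gt_eqF.
have hi0 : 0 < lam^-1 by rewrite invr_gt0.
have : 0 <= lam^-1 * (lam * p - q) ^+ 2 by rewrite mulr_ge0 ?sqr_ge0 // ltW.
have -> : lam^-1 * (lam * p - q) ^+ 2 = lam * p ^+ 2 - 2 * (p * q) + q ^+ 2 / lam.
  by field; rewrite gt_eqF.
move=> h; lra.
Qed.

End Sums.

Lemma N1 m t i T : (1 <= t <= T)%N -> (i < m.+1)%N -> (m < t + i)%N -> (1 <= t + i - m <= T)%N.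
Proof. move=> /andP [h1 h2] h3 h4; apply/andP; split; lia. Qed.
Lemma N2 m t i : ~~ (m < t + i)%N -> (t <= m)%N.
Proof. rewrite -leqNgt => h; lia. Qed.
Lemma N3 m t i : (i < m.+1)%N -> (m < t + i)%N -> (t + i - m = t - (m - i))%N /\ (m - i <= t)%N.
Proof. move=> h1 h2; split; lia. Qed.
Lemma N4 m t i T k : (i < m.+1)%N -> (m < t + i)%N -> (t <= T)%N -> (k < m - i)%N ->
  (t - k = (t - k).-1.+1)%N /\ (1 <= (t - k).-1 < T)%N.
Proof. move=> h1 h2 h3 h4; split; first lia. apply/andP; split; lia. Qed.
Lemma N5 m t i T k : (i < m.+1)%N -> (m < t + i)%N -> (t <= T)%N -> (k < m - i)%N ->
  (2 <= t - k <= T)%N.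
Proof. move=> h1 h2 h3 h4; apply/andP; split; lia. Qed.
Lemma N6 t T : (2 <= t < T.+1)%N -> (1 <= t <= T)%N /\ (1 <= t.-1 <= T)%N.
Proof. move=> /andP [h1 h2]; split; apply/andP; split; lia. Qed.
Lemma eqle (R : realType) (x y : R) : x = y -> x <= y.
Proof. by move=> ->. Qed.

Unset Implicit Arguments. Set Strict Implicit.

Ltac clear_props := repeat match goal with H : ?P |- _ => match type of P with Prop => clear H end end.
Ltac slra := clear_props; lra.

Lemma sumr_ge0_nat (R : realType) (m n : nat) (F : nat -> R) :
  (forall i, (m <= i < n)%N -> 0 <= F i) -> 0 <= \sum_(m <= i < n) F i.
Proof. by move=> h; rewrite big_nat_cond; apply: sumr_ge0 => i /andP [hi _]; exact: h. Qed.

Theorem theorem5 (R : realType) (D a c L G : R) (m : nat) :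
  exists kappa : R, 0 < kappa /\ exists K : R, 0 <= K /\
  forall (d : nat) (T : nat) (X : set 'rV[R]_d)
    (f : nat -> ('I_m.+1 -> 'rV[R]_d) -> R)
    (grad : nat -> 'rV[R]_d -> 'rV[R]_d)
    (x x' v : nat -> 'rV[R]_d),
    (1 <= T)%N ->
    (* (i) *)
    convex_setX X -> compact X -> X 0 ->
    (forall y z, X y -> X z -> norm2 (y - z) <= D) ->
    (* assumptions (ii)-(v), for t = 1..T and for the fixed initial f_0 *)
    (forall t, (t <= T)%N -> convex_on X (unary (f t))) ->
    (forall t (ys : 'I_m.+1 -> 'rV[R]_d), (t <= T)%N -> (forall i, X (ys i)) ->
        0 <= a <= f t ys /\ f t ys <= a + c) ->
    (forall t (ys zs : 'I_m.+1 -> 'rV[R]_d), (t <= T)%N ->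
        (forall i, X (ys i)) -> (forall i, X (zs i)) ->
        `| f t ys - f t zs | <= L * \sum_(i < m.+1) norm2 (ys i - zs i)) ->
    (forall t y, (t <= T)%N -> X y -> is_gradient (unary (f t)) (grad t y) y) ->
    (forall t y, (t <= T)%N -> X y -> norm2 (grad t y) <= G) ->
    (* OFW run on the unary losses, with x_0 = 0 (memory convention) *)
    x 0%N = 0 ->
    X (x 1%N) ->
    (forall t, (1 <= t <= T)%N ->
       X (x' t) /\ forall y, X y -> dot (grad t (x t)) (x' t) <= dot (grad t (x t)) y) ->
    (forall t, (1 <= t < T)%N ->
       x t.+1 = (1 - Num.min 1 (kappa * Num.sqrt ((1 + VT X f T) / T%:R))) *: x t
                + Num.min 1 (kappa * Num.sqrt ((1 + VT X f T) / T%:R)) *: x' t) ->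
    (* comparators *)
    (forall t, (1 <= t <= T)%N -> X (v t)) ->
    regretD f x v T <=
      K * (Num.sqrt (T%:R * (1 + VT X f T + DT grad x T)) + CT v T) /\
    regretD f x v T <=
      K * Num.sqrt (T%:R * (1 + VT X f T + DT grad x T + CT v T)).
Proof.
have hc1 : 0 < 1 + `|c| by have := normr_ge0 c; lra.
set kap := (1 + `|c|)^-1.
have hkap : 0 < kap by rewrite invr_gt0.
have hkap1 : kap <= 1 by rewrite invf_le1 //; have := normr_ge0 c; lra.
set Lmm := `|L| * (m.+1)%:R * m%:R.
have hLmm : 0 <= Lmm by rewrite /Lmm !mulr_ge0.
set K1 := 3 * Lmm * `|D| + (1 + `|c|) ^+ 2 + (1 + D ^+ 2) + `|c| + Lmm + 1.
have hK1 : 0 <= K1.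
  rewrite /K1; have := normr_ge0 c; have := normr_ge0 D; have := sqr_ge0 D;
  have := sqr_ge0 (1 + `|c|); have := mulr_ge0 hLmm (normr_ge0 D); lra.
exists kap; split => //; exists (K1 * (1 + Num.sqrt `|D|)).
split; first by rewrite mulr_ge0 // addr_ge0 // sqrtr_ge0.
move=> d T X f grad x x' v hT hconv _ hX0 hdiam hcvx hbd hlip hgrad _ hx0 hx1 hfw hupd hv.
set V := VT X f T.
set eta := Num.min 1 (kap * Num.sqrt ((1 + V) / T%:R)).
set DTv := DT grad x T.
set C := CT v T.
set s := fun t => sup [set `| unary (f t) y - unary (f t.-1) y | | y in X].
have hVs : V = \sum_(1 <= t < T.+1) s t by [].
have hc0 : 0 <= c.
  have [/andP [h1 h2] h3] := hbd 0%N (fun _ => 0) (leq0n T) (fun _ => hX0); move: h1 h2 h3; slra.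
have hcc : `|c| = c by rewrite ger0_norm.
have hD0 : 0 <= D by apply: le_trans (hdiam 0 0 hX0 hX0); exact: norm2_ge0.
have hDD : `|D| = D by rewrite ger0_norm.
have hb t y : (t <= T)%N -> X y -> a <= unary (f t) y /\ unary (f t) y <= a + c.
  by move=> ht hy; have [/andP [_ h1] h2] := hbd t (fun _ => y) ht (fun _ => hy).
have hsup t : (1 <= t <= T)%N ->
    (forall y, X y -> `| unary (f t) y - unary (f t.-1) y | <= s t) /\ 0 <= s t /\ s t <= c.
  move=> /andP [ht1 ht2].
  have ub : ubound [set `| unary (f t) y - unary (f t.-1) y | | y in X] c.
    move=> r [y hy <-].
    have [h1 h2] := hb t y ht2 hy.
    have [h3 h4] := hb t.-1 y (leq_trans (leq_pred t) ht2) hy.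
    apply/ler_normlP; split; move: h1 h2 h3 h4; slra.
  have hub : has_ubound [set `| unary (f t) y - unary (f t.-1) y | | y in X] by exists c.
  have h1 : forall y, X y -> `| unary (f t) y - unary (f t.-1) y | <= s t.
    by move=> y hy; apply: ub_le_sup hub _ _; exists y.
  split => //; split; first exact: le_trans (normr_ge0 _) (h1 0 hX0).
  by apply: ge_sup => //; exists (`| unary (f t) 0 - unary (f t.-1) 0 |); exists 0.
have hV0 : 0 <= V.
  by rewrite hVs; apply: sumr_ge0_nat => t ht; have [_ [h _]] := hsup t ht.
have hVT : V <= T%:R * c.
  rewrite hVs; apply: le_trans (ler_sum_nat (G := fun _ => c) _) _.
    by move=> t ht; have [_ [_ h]] := hsup t ht.
  by rewrite sumr_const_nat subn1 /= mulr_natl.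
have hT0 : 0 < T%:R :> R by rewrite ltr0n.
have hT1 : 1 <= T%:R :> R by rewrite ler1n.
set sS := Num.sqrt (1 + V).
set sT := Num.sqrt (T%:R : R).
have hsS : 0 < sS by rewrite sqrtr_gt0; move: hV0; slra.
have hsT : 0 < sT by rewrite sqrtr_gt0.
have hsS2 : sS ^+ 2 = 1 + V by rewrite sqr_sqrtr //; move: hV0; slra.
have hsT2 : sT ^+ 2 = T%:R by rewrite sqr_sqrtr // ltW.
have hsq : Num.sqrt ((1 + V) / T%:R) = sS / sT.
  by rewrite sqrtrM; [rewrite sqrtrV // ltW | move: hV0; slra].
have hST : (1 + V) / T%:R <= (1 + `|c|) ^+ 2.
  rewrite ler_pdivrMr // hcc; move: hVT hc0 hT1 hV0; clear_props; nra.
have hsq1 : Num.sqrt ((1 + V) / T%:R) <= 1 + `|c|.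
  by rewrite -(ger0_norm (ltW hc1)) -sqrtr_sqr ler_wsqrtr.
have heta : eta = kap * (sS / sT).
  rewrite /eta hsq min_r // -hsq.
  apply: le_trans (ler_wpM2l (ltW hkap) hsq1) _; by rewrite /kap mulVf // gt_eqF.
have heta0 : 0 < eta by rewrite heta mulr_gt0 // divr_gt0.
have heta1 : eta <= 1 by rewrite /eta ge_min lexx.
have hetaT : eta * T%:R = kap * (sS * sT).
  by rewrite heta -hsT2; field; rewrite gt_eqF.
have hcV : c + V <= eta * ((1 + `|c|) ^+ 2 * (sS * sT)).
  have -> : eta * ((1 + `|c|) ^+ 2 * (sS * sT)) = (1 + `|c|) * (1 + V).
    by rewrite heta -hsS2 /kap; field; rewrite !gt_eqF.
  rewrite hcc; move: hc0 hV0; clear_props; nra.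
have hxX : forall t, (t <= T)%N -> X (x t).
  elim=> [|t IH] ht; first by rewrite hx0.
  case: t IH ht => [|t] IH ht; first by [].
  rewrite hupd; last by apply/andP; split.
  apply: hconv; first exact: IH (ltnW ht).
    by have [] := hfw t.+1 (ltnW ht).
  by rewrite (ltW heta0) heta1.
have hstep r : (1 <= r < T)%N -> x r.+1 - x r = eta *: (x' r - x r).
  by move=> hr; rewrite hupd // -/V -/eta; apply/rowP => i; rewrite !mxE; ring.
have hstepn r : (1 <= r < T)%N -> norm2 (x r.+1 - x r) <= eta * D.
  move=> hr; rewrite hstep // norm2Z ?(ltW heta0) // ler_wpM2l ?(ltW heta0) //.
  case/andP: hr => h1 h2.
  have hr' : (1 <= r <= T)%N by rewrite h1 ltnW.
  apply: hdiam; first exact: (hfw r hr').1.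
  by apply: hxX; exact: ltnW.
have hDT0 : 0 <= DTv by apply: sumr_ge0_nat => t _; exact: sqr_ge0.
set sD := Num.sqrt (1 + DTv).
have hsD : 0 < sD by rewrite sqrtr_gt0; move: hDT0; slra.
have hsD2 : sD ^+ 2 = 1 + DTv by rewrite sqr_sqrtr //; move: hDT0; slra.
set lam := sT / sD.
have hlam : 0 < lam by rewrite divr_gt0.
have hper t : (1 <= t < T)%N ->
  eta * (unary (f t) (x t) - unary (f t) (v t)) <=
  (unary (f t) (x t) - unary (f t.+1) (x t.+1)) + s t.+1 +
  eta * ((lam * norm2 (grad t.+1 (x t.+1) - grad t (x t)) ^+ 2 + D ^+ 2 / lam) / 2).
  move=> /andP [ht1 ht2].
  have htT : (t <= T)%N by exact: ltnW.
  have ht' : (1 <= t <= T)%N by rewrite ht1 htT.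
  have ht1' : (1 <= t.+1 <= T)%N by rewrite ht2.
  have g1 := grad_ineq (hcvx t htT) (hgrad t (x t) htT (hxX t htT)) (hxX t htT) (hv t ht').
  have fw := (hfw t ht').2 (v t) (hv t ht').
  have g2 := grad_ineq (hcvx t.+1 ht2) (hgrad t.+1 (x t.+1) ht2 (hxX t.+1 ht2))
     (hxX t.+1 ht2) (hxX t htT).
  have sv := (hsup t.+1 ht1').1 (x t) (hxX t htT); rewrite /= in sv.
  have e1 : x t - x t.+1 = eta *: (x t - x' t).
    have h := hstep t (introT andP (conj ht1 ht2)).
    by rewrite -opprB h; apply/rowP => i; rewrite !mxE; ring.
  have cs := cauchy_schwarz (grad t (x t) - grad t.+1 (x t.+1)) (x t - x' t).
  have hw : norm2 (x t - x' t) <= D by apply: hdiam; [exact: hxX | exact: (hfw t ht').1].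
  have am := amgm (norm2 (grad t.+1 (x t.+1) - grad t (x t))) D hlam.
  rewrite (norm2_sym (grad t (x t))) in cs.
  have hn0 := norm2_ge0 (grad t.+1 (x t.+1) - grad t (x t)).
  have cs2 : dot (grad t (x t) - grad t.+1 (x t.+1)) (x t - x' t) <=
      (lam * norm2 (grad t.+1 (x t.+1) - grad t (x t)) ^+ 2 + D ^+ 2 / lam) / 2.
    apply: le_trans cs _; apply: le_trans am; exact: ler_wpM2l.
  rewrite e1 dotZr in g2.
  rewrite dotB in cs2.
  rewrite dotBr in g1.
  have k1 : eta * (unary (f t) (x t) - unary (f t) (v t)) <=
      eta * (dot (grad t (x t)) (x t) - dot (grad t (x t)) (x' t)).
    by apply: ler_wpM2l; [exact: ltW | move: g1 fw; slra].
  have k2 := ler_wpM2l (ltW heta0) cs2.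
  rewrite dotBr in g2.
  move/ler_normlP: sv => [sv1 sv2].
  move: k1 k2 g2 sv1 sv2; rewrite !dotBr !mulrBr; slra.
have eA : \sum_(1 <= t < T) (unary (f t) (x t) - unary (f t.+1) (x t.+1)) =
    unary (f 1%N) (x 1%N) - unary (f T) (x T).
  have := telescope_sumr (fun t => unary (f t) (x t)) hT => /= h.
  by rewrite -[RHS]opprB -h -sumrN; apply: eq_bigr => t _; rewrite opprB.
have eS : \sum_(1 <= t < T) s t.+1 = V - s 1%N.
  by rewrite hVs big_nat_recl //; ring.
have hq : \sum_(1 <= t < T) norm2 (grad t.+1 (x t.+1) - grad t (x t)) ^+ 2 <= DTv.
  rewrite /DTv /DT big_nat_recl //= lerDr; exact: sqr_ge0.
have eB : \sum_(1 <= t < T)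
    ((lam * norm2 (grad t.+1 (x t.+1) - grad t (x t)) ^+ 2 + D ^+ 2 / lam) / 2) <=
    (lam * DTv + T%:R * (D ^+ 2 / lam)) / 2.
  rewrite -mulr_suml big_split /= -mulr_sumr sumr_const_nat ler_pM2r //.
  apply: lerD; first by rewrite ler_wpM2l // ltW.
  rewrite -mulr_natl.
  have hk : 0 <= D ^+ 2 / lam by rewrite divr_ge0 ?sqr_ge0 // ltW.
  have hk2 : (T - 1)%:R <= T%:R :> R by rewrite ler_nat leq_subr.
  move: hk hk2; clear_props; nra.
have hs1 : 0 <= s 1%N by have [_ [h _]] := hsup 1%N (introT andP (conj (leqnn 1) hT)).
have hu1 := hb 1%N (x 1%N) hT hx1.
have huT := hb T (x T) (leqnn T) (hxX T (leqnn T)).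
have hsum : eta * \sum_(1 <= t < T) (unary (f t) (x t) - unary (f t) (v t)) <=
    c + V + eta * ((lam * DTv + T%:R * (D ^+ 2 / lam)) / 2).
  rewrite mulr_sumr; apply: le_trans (ler_sum_nat hper) _.
  rewrite big_split /= big_split /= eA eS -mulr_sumr.
  have := ler_wpM2l (ltW heta0) eB; move: hu1 huT hs1; slra.
have hQ : (lam * DTv + T%:R * (D ^+ 2 / lam)) / 2 <= (1 + D ^+ 2) * (sT * sD).
  have e2 : T%:R * (D ^+ 2 / lam) = D ^+ 2 * (sT * sD).
    by rewrite /lam -hsT2; field; rewrite !gt_eqF.
  have e3 : lam * DTv <= sT * sD.
    rewrite /lam mulrAC ler_pdivrMr // -mulrA ler_wpM2l ?ltW // -expr2 hsD2; move: hDT0; slra.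
  rewrite e2; have := mulr_ge0 (sqr_ge0 D) (ltW (mulr_gt0 hsT hsD)); have := mulr_gt0 hsT hsD; move: e3; slra.
have hunary : \sum_(1 <= t < T.+1) (unary (f t) (x t) - unary (f t) (v t)) <=
    c + (1 + `|c|) ^+ 2 * (sS * sT) + (1 + D ^+ 2) * (sT * sD).
  rewrite big_nat_recr //=.
  have hvT := hb T (v T) (leqnn T) (hv T (introT andP (conj hT (leqnn T)))).
  suff : \sum_(1 <= t < T) (unary (f t) (x t) - unary (f t) (v t)) <=
      (1 + `|c|) ^+ 2 * (sS * sT) + (1 + D ^+ 2) * (sT * sD) by move: hvT huT hcc; slra.
  rewrite -(ler_pM2l heta0) mulrDr; apply: le_trans hsum _.
  have := ler_wpM2l (ltW heta0) hQ; move: hcV; slra.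
set ind := fun t : nat => ((t <= m)%N%:R : R).
have hind t : 0 <= ind t by rewrite /ind ler0n.
have hmem (z : nat -> 'rV[R]_d) (P : R) t :
  (1 <= t <= T)%N -> (forall r, (1 <= r <= T)%N -> X (z r)) -> 0 <= P ->
  (forall i : 'I_m.+1, (m < t + i)%N -> norm2 (z (t + i - m)%N - z t) <= P) ->
  `| f t (window z t) - unary (f t) (z t) | <= `|L| * ((m.+1)%:R * (P + D * ind t)).
  move=> /andP [ht1 ht2] hz hP hi.
  have hw : forall i : 'I_m.+1, X (window z t i).
    move=> i; rewrite /window /=; case: ifP => h; last exact: hX0.
    by apply: hz; apply: N1 => //; rewrite ht1 ht2.
  have hzt : forall i : 'I_m.+1, X ((fun _ => z t) i).
    by move=> i; apply: hz; rewrite ht1 ht2.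
  apply: le_trans (hlip t (window z t) (fun _ => z t) ht2 hw hzt) _.
  have hsm : \sum_(i < m.+1) norm2 (window z t i - z t) <= (m.+1)%:R * (P + D * ind t).
    apply: (@le_trans _ _ (\sum_(i < m.+1) (P + D * ind t))); last first.
      by rewrite sumr_const card_ord mulr_natl.
    apply: ler_sum => i _; rewrite /window /=; case: ifP => h.
      by apply: le_trans (hi i h) _; rewrite lerDl mulr_ge0.
    have htm : (t <= m)%N by move/negbT: h; exact: N2.
    rewrite /ind htm mulr1; apply: le_trans (hdiam 0 (z t) hX0 _) _.
      by apply: hz; rewrite ht1 ht2.
    move: hP hD0; slra.
  have hS0 : 0 <= \sum_(i < m.+1) norm2 (window z t i - z t) by apply: sumr_ge0 => i _; exact: norm2_ge0.
  apply: le_trans _ (ler_wpM2l (normr_ge0 L) hsm).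
  by apply: ler_wpM2r => //; exact: ler_norm.
have hD2 : 0 <= eta * D by rewrite mulr_ge0 // ltW.
have hix t : (1 <= t <= T)%N -> forall i : 'I_m.+1, (m < t + i)%N ->
    norm2 (x (t + i - m)%N - x t) <= m%:R * (eta * D).
  move=> /andP [ht1 ht2] i hi.
  have [e hmi] := N3 (ltn_ord i) hi.
  rewrite e; apply: le_trans (path_bound x hmi) _.
  apply: le_trans (@ler_sum_nat _ 0 (m - i) _ (fun _ => eta * D) _) _.
    move=> k /andP [_ hk].
    have [ek hr] := N4 (ltn_ord i) hi ht2 hk.
    by rewrite ek /=; apply: hstepn.
  rewrite sumr_const_nat subn0 -[X in X <= _]mulr_natl.
  by apply: ler_wpM2r => //; rewrite ler_nat leq_subr.
set b := fun r : nat => if (2 <= r <= T)%N then norm2 (v r - v r.-1) else 0.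
have hb0 r : 0 <= b r by rewrite /b; case: ifP => // _; exact: norm2_ge0.
set Pv := fun t : nat => \sum_(0 <= k < m) b (t - k)%N.
have hPv0 t : 0 <= Pv t by apply: sumr_ge0_nat => k _.
have hiv t : (1 <= t <= T)%N -> forall i : 'I_m.+1, (m < t + i)%N ->
    norm2 (v (t + i - m)%N - v t) <= Pv t.
  move=> /andP [ht1 ht2] i hi.
  have [e hmi] := N3 (ltn_ord i) hi.
  rewrite e; apply: le_trans (path_bound v hmi) _.
  have e2 : \sum_(0 <= k < m - i) norm2 (v (t - k)%N - v (t - k).-1) =
            \sum_(0 <= k < m - i) b (t - k)%N.
    apply: eq_big_nat => k /andP [_ hk].
    by rewrite /b (N5 (ltn_ord i) hi ht2 hk).
  rewrite e2 /Pv (@big_cat_nat _ _ _ (m - i) 0 m) //= ?leq_subr // lerDl.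
  exact: sumr_ge0_nat.
have ereg : regretD f x v T = \sum_(1 <= t < T.+1)
    ((f t (window x t) - unary (f t) (x t)) + (unary (f t) (x t) - unary (f t) (v t))
     + (unary (f t) (v t) - f t (window v t))).
  by rewrite /regretD -sumrB; apply: eq_bigr => t _; ring.
have hxX' : forall r, (1 <= r <= T)%N -> X (x r) by move=> r /andP [_ h]; exact: hxX.
have hreg : regretD f x v T <= \sum_(1 <= t < T.+1)
    (`|L| * ((m.+1)%:R * (m%:R * (eta * D) + D * ind t))
     + (unary (f t) (x t) - unary (f t) (v t))
     + `|L| * ((m.+1)%:R * (Pv t + D * ind t))).
  rewrite ereg; apply: ler_sum_nat => t ht.
  apply: lerD; first apply: lerD => //.
    apply: le_trans (ler_norm _) (hmem x _ t ht hxX' _ (hix t ht)).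
    exact: mulr_ge0.
  rewrite -opprB; apply: le_trans (ler_norm _) _; rewrite normrN.
  exact: hmem v _ t ht hv (hPv0 t) (hiv t ht).
rewrite big_split /= big_split /= in hreg.
have hsind : \sum_(1 <= t < T.+1) ind t <= m%:R.
  by apply: le_trans (sum_count R m T) _; rewrite ler_nat geq_minr.
have hA : \sum_(1 <= t < T.+1) `|L| * ((m.+1)%:R * (m%:R * (eta * D) + D * ind t)) <=
    `|L| * ((m.+1)%:R * (m%:R * (eta * T%:R) * D + D * m%:R)).
  rewrite -!mulr_sumr; apply: ler_wpM2l; first exact: normr_ge0.
  apply: ler_wpM2l; first exact: ler0n.
  rewrite big_split /= sumr_const_nat -mulr_sumr subn1 /=.
  apply: lerD; first by apply: eqle; rewrite -mulr_natr; ring.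
  exact: ler_wpM2l.
have hPv : \sum_(1 <= t < T.+1) Pv t <= m%:R * C.
  rewrite /Pv exchange_big_nat /=.
  apply: le_trans (@ler_sum_nat _ 0 m _ (fun _ => C) _) _; last first.
    by rewrite sumr_const_nat subn0 mulr_natl.
  move=> k _.
  have h1 : \sum_(1 <= t < T.+1) b (t - k)%N <= \sum_(0 <= t < T.+1) b (t - k)%N.
    by rewrite (big_ltn (ltn0Sn T)) lerDr.
  apply: le_trans h1 _.
  have hb00 : b 0%N = 0 by rewrite /b.
  apply: le_trans (sum_shift T.+1 k hb0 hb00) _.
  have esp : \sum_(0 <= t < T.+1) b t = \sum_(0 <= t < 2) b t + \sum_(2 <= t < T.+1) b t.
    by rewrite (@big_cat_nat _ _ _ 2 0 T.+1).
  have e0 : \sum_(0 <= t < 2) b t = 0.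
    rewrite big_nat_recl // big_nat_recl // big_geq //.
    by rewrite /b /= !add0r.
  rewrite esp e0 add0r; apply: eqle; apply: eq_big_nat => t /andP [h1' h2'].
  by rewrite /b h1' -ltnS h2'.
have hC : \sum_(1 <= t < T.+1) `|L| * ((m.+1)%:R * (Pv t + D * ind t)) <=
    `|L| * ((m.+1)%:R * (m%:R * C + D * m%:R)).
  rewrite -!mulr_sumr; apply: ler_wpM2l; first exact: normr_ge0.
  apply: ler_wpM2l; first exact: ler0n.
  rewrite big_split /= -mulr_sumr; apply: lerD => //.
  exact: ler_wpM2l.
set W := Num.sqrt (T%:R * (1 + V + DTv)).
have hTV : 1 <= T%:R * (1 + V + DTv).
  have := mulr_ge0 (ltW hT0) (addr_ge0 hV0 hDT0); move: hT1; clear_props; nra.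
have hW1 : 1 <= W by rewrite -sqrtr1; apply: ler_wsqrtr.
have hWS : sS * sT <= W.
  rewrite -sqrtrM; last by move: hV0; slra.
  apply: ler_wsqrtr; have := mulr_ge0 (ltW hT0) hDT0; move: hT0; clear_props; nra.
have hWD : sT * sD <= W.
  rewrite -sqrtrM; last exact: ltW.
  apply: ler_wsqrtr; have := mulr_ge0 (ltW hT0) hV0; move: hT0; clear_props; nra.
have hetaW : eta * T%:R <= W.
  rewrite hetaT; apply: le_trans hWS; have := mulr_gt0 hsS hsT; move: hkap1; clear_props; nra.
have hC0 : 0 <= C by apply: sumr_ge0_nat => t _; exact: norm2_ge0.
have hmD : 0 <= m%:R * D by rewrite mulr_ge0.
have p1 : `|L| * ((m.+1)%:R * (m%:R * (eta * T%:R) * D + D * m%:R)) <= 2 * Lmm * D * W.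
  have i1 : m%:R * (eta * T%:R) * D + D * m%:R <= 2 * (m%:R * D) * W.
    have := ler_wpM2l hmD hetaW; have := ler_wpM2l hmD hW1.
    clear_props; lra.
  apply: le_trans (ler_wpM2l (normr_ge0 L) (ler_wpM2l (ler0n _ _) i1)) _.
  by apply: eqle; rewrite /Lmm; ring.
have p3 : `|L| * ((m.+1)%:R * (m%:R * C + D * m%:R)) <= Lmm * C + Lmm * D * W.
  have i1 : m%:R * C + D * m%:R <= m%:R * C + (m%:R * D) * W.
    have := ler_wpM2l hmD hW1; clear_props; lra.
  apply: le_trans (ler_wpM2l (normr_ge0 L) (ler_wpM2l (ler0n _ _) i1)) _.
  by apply: eqle; rewrite /Lmm; ring.
have p2 : c + (1 + `|c|) ^+ 2 * (sS * sT) + (1 + D ^+ 2) * (sT * sD) <=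
    (`|c| + (1 + `|c|) ^+ 2 + (1 + D ^+ 2)) * W.
  have q1 := ler_wpM2l (normr_ge0 c) hW1.
  have q2 := ler_wpM2l (sqr_ge0 (1 + `|c|)) hWS.
  have q3 := ler_wpM2l (addr_ge0 ler01 (sqr_ge0 D)) hWD.
  move: q1 q2 q3 hcc; clear_props; rewrite mulr1; lra.
have hWC : 0 <= W + C by apply: addr_ge0 => //; apply: le_trans hW1.
have hmain : regretD f x v T <= K1 * (W + C).
  have hW0 : 0 <= W by apply: le_trans hW1.
  have k1 := mulr_ge0 (addr_ge0 hLmm ler01) hW0.
  have k2 := mulr_ge0 (addr_ge0 (addr_ge0 (addr_ge0 (mulr_ge0 (mulr_ge0 (ler0n _ 3) hLmm) (normr_ge0 D)) (sqr_ge0 (1 + `|c|))) (addr_ge0 ler01 (sqr_ge0 D))) (addr_ge0 (normr_ge0 c) ler01)) hC0.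
  rewrite hDD in k2; move: hreg hunary hA hC p1 p2 p3 k1 k2; rewrite /K1 hDD.
  clear_props; move=> *; lra.
set W2 := Num.sqrt (T%:R * (1 + V + DTv + C)).
have hWW2 : W <= W2.
  apply: ler_wsqrtr; apply: ler_wpM2l; [exact: ltW | move: hC0; slra].
have hCT : C <= T%:R * D.
  rewrite /C /CT.
  apply: le_trans (@ler_sum_nat _ 2 T.+1 _ (fun _ => D) _) _.
    by move=> t ht; have [h1 h2] := N6 ht; apply: hdiam; apply: hv.
  rewrite sumr_const_nat -[X in X <= _]mulr_natl; apply: ler_wpM2r => //.
  by rewrite ler_nat subSS leq_subr.
have hCs : C <= Num.sqrt `|D| * W2.
  have q : C * C <= (T%:R * D) * C by apply: ler_wpM2r.
  have hTC : C * C <= `|D| * (T%:R * C) by rewrite hDD; move: q; clear_props; lra.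
  apply: (@le_trans _ _ (Num.sqrt (`|D| * (T%:R * C)))).
    by rewrite -[X in X <= _](ger0_norm hC0) -sqrtr_sqr expr2; apply: ler_wsqrtr.
  rewrite sqrtrM ?normr_ge0 //; apply: ler_wpM2l; first exact: sqrtr_ge0.
  apply: ler_wsqrtr; apply: ler_wpM2l; [exact: ltW | move: hV0 hDT0; slra].
split.
  apply: le_trans hmain _.
  have := mulr_ge0 (mulr_ge0 hK1 hWC) (sqrtr_ge0 `|D|); clear_props; lra.
apply: le_trans hmain _.
rewrite -mulrA; apply: ler_wpM2l => //.
move: hWW2 hCs; clear_props; lra.
Qed.
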